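(* Let $d\in\mathbb Z$ and let $P:k((z))\to k((z))$ be a $k$-linear operator of the form $P(\sum_\beta c_\beta z^\beta)=\sum_\beta c_\beta\sum_{i\ge0}p_i(\beta)z^{\beta+d+i}$ with $p_0(\beta)=1$ for all $\beta$ and each $p_i(\beta)$ a polynomial in $\beta$. For integers $\alpha\ge0$ write $P^\alpha(\sum_\beta c_\beta z^\beta)=\sum_\beta c_\beta\sum_{i\ge0}p_i(\alpha,\beta)z^{\beta+\alpha d+i}$. Then for every $i$, $p_i(\alpha,\beta)$ is given by a polynomial in $\alpha$ and $\beta$.
   Context: $k$ is a field of characteristic zero. The coefficients $p_i(\alpha,\beta)$ are defined for integers $\alpha\ge0,\beta$ by the displayed expansion of the $\alpha$-th power of $P$ (so $p_i(1,\beta)=p_i(\beta)$, $p_0(0,\beta)=1$, $p_i(0,\beta)=0$ for $i>0$). *)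

(* Defs.v *)
From HB Require Import structures.
From mathcomp Require Import all_boot all_order all_algebra.
Set Implicit Arguments. Unset Strict Implicit. Unset Printing Implicit Defensive.
Import Order.TTheory GRing.Theory Num.Theory.
Local Open Scope ring_scope.

(* The operator P is encoded by d : int and the coefficient polynomials
   p : nat -> {poly k}:  P(z^b) = \sum_i (p i).[b] z^(b + d + i).
   palpha p d a b n is the coefficient p_n(a,b) of z^(b + a d + n) in P^a(z^b),
   computed by expanding P^(a+1)(z^b) = P(P^a(z^b)):
     P(P^a z^b) = \sum_i p_i(a,b) \sum_j p_j(b + a d + i) z^(b+(a+1)d+i+j). *)
Fixpoint palpha (k : fieldType) (p : nat -> {poly k}) (d : int)
    (a : nat) (b : int) (n : nat) : k :=
  match a with
  | 0%N => if n == 0%N then 1 else 0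
  | a'.+1 => \sum_(i < n.+1)
       palpha p d a' b i * (p (n - i)%N).[(b + (a'%:Z) * d + (i%:Z))%R%:~R]
  end.

(* Main.v *)
Require Import Defs.
From HB Require Import structures.
From mathcomp Require Import all_boot all_order all_algebra.
Import GRing.Theory.
Local Open Scope ring_scope.

Section R.
Variable k : fieldType.

Definition Repr (f : nat -> int -> k) := exists Q : {poly {poly k}},
  forall (a : nat) (b : int), f a b = (Q.[(b%:~R : k)%:P]).[a%:R].

Lemma Repr_ext {f g} : (forall a b, f a b = g a b) -> Repr f -> Repr g.
Proof. by move=> e [Q HQ]; exists Q => a b; rewrite -e. Qed.

Lemma Repr_const c : Repr (fun _ _ => c).
Proof. by exists ((c%:P)%:P) => a b; rewrite !hornerC. Qed.

Lemma Repr_a : Repr (fun a _ => a%:R).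
Proof. by exists (('X)%:P) => a b; rewrite hornerC hornerX. Qed.

Lemma Repr_b : Repr (fun _ b => b%:~R).
Proof. by exists 'X => a b; rewrite hornerX hornerC. Qed.

Lemma Repr_add {f g} : Repr f -> Repr g -> Repr (fun a b => f a b + g a b).
Proof.
by move=> [P HP] [Q HQ]; exists (P + Q) => a b; rewrite !hornerD HP HQ.
Qed.

Lemma Repr_mul {f g} : Repr f -> Repr g -> Repr (fun a b => f a b * g a b).
Proof.
by move=> [P HP] [Q HQ]; exists (P * Q) => a b; rewrite !hornerM HP HQ.
Qed.

Lemma Repr_sum {n} {F : nat -> nat -> int -> k} :
  (forall j, (j < n)%N -> Repr (F j)) ->
  Repr (fun a b => \sum_(j < n) F j a b).
Proof.
elim: n => [|n IH] H.
  by apply: (Repr_ext _ (Repr_const 0)) => a b; rewrite big_ord0.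
apply: (Repr_ext _ (Repr_add (IH _) (H n _))) => //.
- by move=> a b; rewrite big_ord_recr.
- by move=> j jn; apply: H; apply: ltnW.
Qed.

Lemma Repr_comp (q : {poly k}) {f} : Repr f -> Repr (fun a b => q.[f a b]).
Proof.
move=> Hf; elim/poly_ind: q => [|q c IH].
  by apply: (Repr_ext _ (Repr_const 0)) => a b; rewrite horner0.
apply: (Repr_ext _ (Repr_add (Repr_mul IH Hf) (Repr_const c))) => a b.
by rewrite hornerMXaddC.
Qed.

Definition S m (a : nat) : k := \sum_(a' < a) (a'%:R) ^+ m.

Lemma S_ident m a :
  \sum_(i < m.+1) S i a *+ 'C(m.+1, i) = (a%:R) ^+ m.+1.
Proof.
elim: a => [|a IH].
  rewrite /S big1 ?expr0n // => i _; by rewrite big_ord0 mul0rn.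
rewrite /S.
under eq_bigr => i _ do rewrite big_ord_recr /= mulrnDl.
rewrite big_split /=. rewrite /S in IH. rewrite IH -natr1 exprD1n [RHS]big_ord_recr /=.
by rewrite binn mulr1n addrC.
Qed.
End R.
Arguments Repr {k}.
Arguments Repr_ext {k f g}.
Arguments Repr_const {k}.
Arguments Repr_add {k f g}.
Arguments Repr_mul {k f g}.
Arguments Repr_sum {k n F}.
Arguments Repr_comp {k} q {f}.

Lemma S_repr (k : fieldType) (hchar : [pchar k] =i pred0) m :
  Repr (fun a (_ : int) => S k m a).
Proof.
elim: m {-2}m (leqnn m) => [|m IH] j.
  rewrite leqn0 => /eqP ->.
  by apply: (Repr_ext _ (Repr_a k)) => a b; rewrite /S; under eq_bigr do rewrite expr0;
     rewrite sumr_const card_ord.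
rewrite leq_eqVlt => /orP [/eqP ->|]; last by apply: IH.
have hm : (m.+2)%:R != 0 :> k.
  by move/pcharf0P: hchar => ->.
have e : forall a, S k m.+1 a = (m.+2)%:R^-1 *
   ((a%:R) ^+ m.+2 - \sum_(i < m.+1) S k i a *+ 'C(m.+2, i)).
  move=> a; rewrite -(S_ident _ m.+1) big_ord_recr /= binSn addrAC subrr add0r.
  by rewrite -[S k m.+1 a *+ _]mulr_natl mulKf.
apply: (Repr_ext (fun a b => esym (e a))).
apply: Repr_mul; first exact: Repr_const.
apply: Repr_add.
  by apply: (Repr_ext _ (Repr_comp ('X^(m.+2) : {poly k}) (Repr_a k))) => a b; rewrite hornerXn.
apply: (Repr_ext _ (Repr_mul (Repr_const (-1)) (Repr_sum (F := fun i a (_:int) => S k i a *+ 'C(m.+2, i)) _))).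
  by move=> a b; rewrite mulN1r.
move=> i im.
apply: (Repr_ext _ (Repr_mul (IH i im) (Repr_const ('C(m.+2, i))%:R))).
by move=> a b; rewrite mulr_natr.
Qed.

Lemma sum_repr (k : fieldType) (hchar : [pchar k] =i pred0) f :
  @Repr k f -> Repr (fun a b => \sum_(a' < a) f a' b).
Proof.
move=> [Q HQ].
have e : forall a b, \sum_(a' < a) f a' b =
  \sum_(j < size Q) (b%:~R) ^+ j *
     \sum_(i < size Q`_j) (Q`_j)`_i * S k i a.
  move=> a b.
  under eq_bigr do rewrite HQ (horner_coef Q) horner_sum.
  rewrite exchange_big /=; apply: eq_bigr => j _.
  under eq_bigr do rewrite -rmorphXn mulrC hornerCM.
  rewrite -mulr_sumr; congr (_ * _).
  have hc : forall x, (Q`_j).[x] = \sum_(i < size Q`_j) Q`_j`_i * x^+i by move=> x; exact: horner_coef.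
  rewrite (eq_bigr _ (fun i _ => hc _)).
  rewrite exchange_big /=; apply: eq_bigr => i _.
  by rewrite /S mulr_sumr.
suff H : Repr (fun (a : nat) (b : int) => \sum_(j < size Q) ((b%:~R : k) ^+ j *
     \sum_(i < size Q`_j) (Q`_j)`_i * S k i a)).
  by apply: (Repr_ext _ H) => a b; rewrite e.
apply: (Repr_sum (F := fun (j : nat) (a : nat) (b : int) => ((b%:~R : k) ^+ j *
     \sum_(i < size Q`_j) (Q`_j)`_i * S k i a))) => j _.
apply: Repr_mul.
  by apply: (Repr_ext _ (Repr_comp ('X^j : {poly k}) (Repr_b k))) => a b; rewrite hornerXn.
apply: (Repr_sum (F := fun (i : nat) (a : nat) (b : int) => (Q`_j)`_i * S k i a)) => i _.
by apply: Repr_mul; [exact: Repr_const | exact: S_repr].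
Qed.

Theorem lemma7p1 (k : fieldType) (hchar : [pchar k] =i pred0)
    (d : int) (p : nat -> {poly k}) (hp0 : p 0%N = 1) (i : nat) :
  exists Q : {poly {poly k}},
    forall (alpha : nat) (beta : int),
      palpha p d alpha beta i = (Q.[(beta%:~R : k)%:P]).[alpha%:R].
Proof.
suff: Repr (fun a b => palpha p d a b i) by [].
elim: i {-2}i (leqnn i) => [|n IH] i.
  rewrite leqn0 => /eqP ->.
  apply: (Repr_ext _ (Repr_const 1)) => a b.
  elim: a => [|a IHa] //=.
  by rewrite big_ord_recr big_ord0 /= add0r -IHa subnn hp0 hornerC mulr1.
rewrite leq_eqVlt => /orP [/eqP ->|]; last by apply: IH.
set F := fun a b => \sum_(i < n.+1) palpha p d a b i *
   (p (n.+1 - i)%N).[(b + (a%:Z) * d + (i%:Z))%R%:~R].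
have e : forall a b, palpha p d a b n.+1 = 0 + \sum_(a' < a) F a' b.
  move=> a b; elim: a => [|a IHa]; first by rewrite big_ord0 addr0.
  rewrite [in RHS]big_ord_recr /= addrA -IHa /=.
  by rewrite big_ord_recr /= subnn hp0 hornerC mulr1 addrC.
suff H : Repr (fun a b => 0 + \sum_(a' < a) F a' b).
  by apply: (Repr_ext _ H) => a b; rewrite e.
apply: Repr_add; first exact: Repr_const.
apply: (@sum_repr k hchar F).
apply: (Repr_sum (F := fun (i : nat) a b => palpha p d a b i *
   (p (n.+1 - i)%N).[(b + (a%:Z) * d + (i%:Z))%R%:~R])) => j jn.
apply: Repr_mul; first by apply: IH.
apply: Repr_comp.
apply: (Repr_ext _ (Repr_add (Repr_add (Repr_b k) (Repr_mul (Repr_a k) (Repr_const (d%:~R)))) (Repr_const (j%:R)))).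
by move=> a b; rewrite !intrD intrM.
Qed.
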